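(* Let $z\in\mathbb{C}$, $x=e^{2\pi iz}$, and let $\omega_0,\dots,\omega_r\in\mathbb{C}$ with $\omega_0,\dots,\omega_r,\omega_0+\omega_1\in\mathbb{C}\setminus\mathbb{R}$, $q_j=e^{2\pi i\omega_j}$. Then $$\frac{(x|q_0,q_1,q_2,\dots,q_r)_\infty}{(x|q_0,q_0q_1,q_2,\dots,q_r)_\infty}=(x|q_1^{-1},q_0q_1,q_2,\dots,q_r)_\infty^{-1}.$$
   Context: q-shifted factorial: for $q_j=e^{2\pi i\omega_j}$ with $\omega_j\in\mathbb{C}\setminus\mathbb{R}$: if all $|q_j|<1$, $(x|q_0,\dots,q_r)_\infty=\prod_{j_0,\dots,j_r\ge0}(1-xq_0^{j_0}\cdots q_r^{j_r})$; in general (the expression is symmetric in the $q_j$), if $|q_0|,\dots,|q_{k-1}|>1$ and $|q_k|,\dots,|q_r|<1$, $(x|\underline q)_\infty=\big((q_0\cdots q_{k-1})^{-1}x\,|\,q_0^{-1},\dots,q_{k-1}^{-1},q_k,\dots,q_r\big)_\infty^{(-1)^k}$, the latter product being absolutely convergent. *)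

(* Defs.v *)
From HB Require Import structures.
From mathcomp Require Import all_boot all_order all_algebra.
From mathcomp Require Import complex.
From mathcomp Require Import all_classical all_reals all_analysis.
Set Implicit Arguments. Unset Strict Implicit. Unset Printing Implicit Defensive.
Import Order.TTheory GRing.Theory Num.Theory.
Import numFieldNormedType.Exports.
Local Open Scope ring_scope.
Local Open Scope complex_scope.
Local Open Scope classical_set_scope.

(* e(w) = exp(2 pi i w) = exp(-2 pi complex.Im w) (cos (2 pi complex.Re w) + i sin (2 pi complex.Re w)) *)
Definition e2pi {R : realType} (w : R[i]) : R[i] :=
  (expR (- (2 * pi * complex.Im w)))%:C *
  ((cos (2 * pi * complex.Re w)) +i* (sin (2 * pi * complex.Re w))).

Definition qpoch_box {R : realType} (x : R[i]) (qs : seq R[i]) (N : nat) : R[i] :=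
  \prod_(j : {ffun 'I_(size qs) -> 'I_N})
     (1 - x * \prod_(i < size qs) (nth 0 qs i) ^+ (j i)).

(* The (absolutely convergent, when all |q_j| < 1) infinite product
   (x | q_0, ..., q_r)_oo, as the limit of its box partial products. *)
Definition qpoch_conv {R : realType} (x : R[i]) (qs : seq R[i]) : R[i] :=
  lim ((qpoch_box x qs : nat -> (R[i])^o) @ \oo).

(* General q-shifted factorial: with S the set of q_j with |q_j| > 1 and
   k = #S, (x|q)_oo = ((prod_{j in S} q_j)^{-1} x | q_j^{-1} (j in S), q_j (j notin S))_oo^{(-1)^k}. *)
Definition qpoch {R : realType} (x : R[i]) (qs : seq R[i]) : R[i] :=
  let big := [seq q <- qs | 1 < `|q|] in
  let qs' := [seq (if 1 < `|q| then q^-1 else q) | q <- qs] in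
  let y := (\prod_(q <- big) q)^-1 * x in
  if odd (size big) then (qpoch_conv y qs')^-1 else qpoch_conv y qs'.

(* Main.v *)
Require Import Defs.
Set Warnings "-notation-overridden,-ambiguous-paths,-notation-incompatible-prefix,-deprecated".
From HB Require Import structures.
From mathcomp Require Import all_boot all_order all_algebra.
From mathcomp Require Import complex.
From mathcomp Require Import all_classical all_reals all_analysis.
Import Order.TTheory GRing.Theory Num.Theory.
Import numFieldNormedType.Exports.
Local Open Scope ring_scope.
Local Open Scope complex_scope.
Local Open Scope classical_set_scope.
From mathcomp Require Import ring lra zify.
Section S. Context {R : realType}.
Local Notation nc := (@Normc.normc R).
Lemma cvgC (z : nat -> (R[i])^o) (L : (R[i])^o) :
  (forall e : R, 0 < e -> exists N, forall n, (N <= n)%N -> nc (L - z n) < e) ->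
  z @ \oo --> L.
Proof.
move=> H; apply/cvgrPdist_lt => eps eps0.
move: eps0; rewrite ltcE /= => /andP[/eqP Hi He].
have [N HN] := H _ He.
exists N => // n /= Nn.
have -> : eps = (complex.Re eps)%:C by clear HN; case: eps Hi He => a b /= ->.
rewrite [X in X < _]/Num.norm /=. 
by rewrite ltcR HN.
Qed.
Lemma cvgR (u : nat -> R) (l : R) : u @ \oo --> l ->
  forall e : R, 0 < e -> exists N, forall n, (N <= n)%N -> `|l - u n| < e.
Proof.
move/cvgrPdist_lt => H e e0.
have [N _ HN] := H e e0.
by exists N => n Nn; apply: HN.
Qed.
End S.
Section S3. Context {R : realType}.
Lemma cauchyR (u : nat -> R) (e : nat -> R) :
  (forall n m, `|u n - u m| <= e n + e m) ->
  (forall eps : R, 0 < eps -> exists N, forall n, (N <= n)%N -> e n < eps) ->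
  cvg (u @ \oo).
Proof.
move=> Hu He.
apply: cauchy_cvg; apply: cauchy_exP => eps eps0.
have [N HN] := He (eps / 2) ltac:(by rewrite divr_gt0).
exists (u N); exists N => // n /= Nn.
rewrite -ball_normE /ball_ /=.
have h1 := HN N (leqnn N); have h2 := HN n Nn; have h3 := Hu N n.
lra.
Qed.
End S3.
Section S4. Context {R : realType}.
Local Notation nc := (@Normc.normc R).
Lemma ncRe (z : R[i]) : `|complex.Re z| <= nc z.
Proof.
case: z => a b /=; rewrite -sqrtr_sqr ler_sqrt ?addr_ge0 ?sqr_ge0 //.
by rewrite lerDl sqr_ge0.
Qed.
Lemma ncIm (z : R[i]) : `|complex.Im z| <= nc z.
Proof.
case: z => a b /=; rewrite -sqrtr_sqr ler_sqrt ?addr_ge0 ?sqr_ge0 //.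
by rewrite lerDr sqr_ge0.
Qed.
Lemma ncReIm (z : R[i]) : nc z <= `|complex.Re z| + `|complex.Im z|.
Proof.
case: z => a b.
have -> : (a +i* b) = (a +i* 0) + (0 +i* b) by rewrite /GRing.add /= addr0 add0r.
apply: (le_trans (le_normcD _ _)).
by rewrite /= expr0n /= !addr0 !add0r !sqrtr_sqr.
Qed.
Lemma ReB (a b : R[i]) : complex.Re (a - b) = complex.Re a - complex.Re b.
Proof. by case: a; case: b. Qed.
Lemma ImB (a b : R[i]) : complex.Im (a - b) = complex.Im a - complex.Im b.
Proof. by case: a; case: b. Qed.
End S4.
Section Rearr.
Variables (R : realType) (I : eqType) (f : I -> R[i]).
Local Notation nc := (@Normc.normc R).

Lemma nc_ge0 (z : R[i]) : 0 <= nc z.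
Proof. by case: z => a b; rewrite /Normc.normc sqrtr_ge0. Qed.
Lemma ncD (a b : R[i]) : nc (a + b) <= nc a + nc b.
Proof. exact: le_normcD. Qed.
Lemma ncB (a b : R[i]) : nc (a - b) <= nc a + nc b.
Proof. by rewrite (le_trans (ncD _ _)) // normcN. Qed.
Lemma ncM (a b : R[i]) : nc (a * b) = nc a * nc b.
Proof. exact: Normc.normcM. Qed.
Lemma nc1 : nc 1 = 1. Proof. exact: Normc.normc1. Qed.

Definition Pr (s : seq I) : R[i] := \prod_(i <- s) (1 - f i).
Definition Gr (s : seq I) : R := \prod_(i <- s) (1 + nc (f i)).

Lemma Gr_ge1 s : 1 <= Gr s.
Proof.
elim: s => [|a s IH]; rewrite /Gr ?big_nil ?big_cons //.
have := nc_ge0 (f a) => h. rewrite -/(Gr s). nra.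
Qed.

Lemma Pr_bound s : nc (Pr s) <= Gr s.
Proof.
elim: s => [|a s IH]; rewrite /Pr /Gr ?big_nil ?big_cons ?nc1 //.
rewrite -/(Pr s) -/(Gr s) ncM.
have h1 := nc_ge0 (f a); have h2 := nc_ge0 (Pr s).
have h3 : nc (1 - f a) <= 1 + nc (f a) by rewrite (le_trans (ncB _ _)) ?nc1.
have h4 := nc_ge0 (1 - f a).
by apply: ler_pM.
Qed.

Lemma Pr_sub1 s : nc (Pr s - 1) <= Gr s - 1.
Proof.
elim: s => [|a s IH]; rewrite /Pr /Gr ?big_nil ?big_cons.
  by rewrite subrr /Normc.normc /= expr0n /= addr0 sqrtr0.
rewrite -/(Pr s) -/(Gr s).
have -> : (1 - f a) * Pr s - 1 = (1 - f a) * (Pr s - 1) - f a by ring.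
have h1 := nc_ge0 (f a); have h2 := nc_ge0 (Pr s - 1).
have h3 : nc (1 - f a) <= 1 + nc (f a) by rewrite (le_trans (ncB _ _)) ?nc1.
have h4 := nc_ge0 (1 - f a).
have h5 : nc ((1 - f a) * (Pr s - 1)) <= (1 + nc (f a)) * (Gr s - 1).
  by rewrite ncM; apply: ler_pM.
rewrite (le_trans (ncB _ _)) //. lra.
Qed.

Lemma subset_diff {S U : seq I} : uniq S -> uniq U -> {subset S <= U} ->
  nc (Pr U - Pr S) <= Gr U - Gr S /\ Gr S <= Gr U.
Proof.
move=> uS uU sSU.
set D := [seq i <- U | i \notin S].
have pU : perm_eq U (S ++ D).
  apply: uniq_perm => //.
    rewrite cat_uniq uS filter_uniq // andbT /=.
    by apply/hasPn => x; rewrite mem_filter => /andP[].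
  move=> x; rewrite mem_cat mem_filter.
  by case xS: (x \in S) => //=; rewrite sSU.
have eP : Pr U = Pr S * Pr D by rewrite /Pr (perm_big _ pU) big_cat.
have eG : Gr U = Gr S * Gr D by rewrite /Gr (perm_big _ pU) big_cat.
rewrite eP eG.
have -> : Pr S * Pr D - Pr S = Pr S * (Pr D - 1) by ring.
have h1 := Pr_bound S; have h2 := Pr_sub1 D; have h3 := Gr_ge1 S; have h4 := Gr_ge1 D.
have h5 := nc_ge0 (Pr S); have h6 := nc_ge0 (Pr D - 1).
split; last by nra.
rewrite ncM. have : nc (Pr S) * nc (Pr D - 1) <= Gr S * (Gr D - 1) by apply: ler_pM.
lra.
Qed.

Definition exh (S : nat -> seq I) :=
  [/\ forall N, uniq (S N), forall N, {subset S N <= S N.+1} & forall i, exists N, i \in S N].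

Lemma exh_mono {S} : exh S -> forall N M, (N <= M)%N -> forall x, x \in S N -> x \in S M.
Proof.
case=> _ Hs _ N M /subnKC <-; elim: (M - N)%N => [|k IH]; first by rewrite addn0.
by move=> x /IH; rewrite addnS; apply: Hs.
Qed.

Lemma exh_fin {S} : exh S -> forall s : seq I, exists N, {subset s <= S N}.
Proof.
move=> hS; have [_ _ Hc] := hS; elim=> [|a s [N HN]]; first by exists 0%N.
have [M HM] := Hc a; exists (maxn N M) => x; rewrite inE => /orP[/eqP->|/HN].
  exact: (exh_mono hS _ _ (leq_maxr N M) _ HM).
by move=> h; exact: (exh_mono hS _ _ (leq_maxl N M) _ h).
Qed.

Hypothesis bound : exists B, forall s, uniq s -> Gr s <= B.

Lemma rearr S S' : exh S -> exh S' ->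
  exists L : (R[i])^o, (fun N => Pr (S N) : (R[i])^o) @ \oo --> L /\ (fun N => Pr (S' N) : (R[i])^o) @ \oo --> L.
Proof.
move=> hS hS'.
have [B HB] := bound.
have [uS _ _] := hS; have [uS' _ _] := hS'.
set A := range (fun N => Gr (S N)).
have hsA : has_sup A.
  split; first by exists (Gr (S 0%N)), 0%N.
  by exists B => _ [N _ <-]; apply: HB.
set Gs := sup A.
have F1 : forall s, uniq s -> Gr s <= Gs.
  move=> s us; have [N HN] := exh_fin hS s.
  have [_ h] := subset_diff us (uS N) HN.
  apply: (le_trans h).
  by have /ubP := sup_upper_bound hsA; apply; exists N.
have F2 : forall T, exh T -> forall e : R, 0 < e -> exists N, forall n, (N <= n)%N -> Gs - Gr (T n) < e.
  move=> T hT e e0; have [uT _ _] := hT.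
  have [_ [p _ <-] Hp] := sup_adherent e0 hsA.
  have [N HN] := exh_fin hT (S p).
  exists N => n Nn.
  have [_ h] := subset_diff (uS p) (uT n) (fun x hx => exh_mono hT _ _ Nn _ (HN x hx)).
  rewrite -/Gs in Hp; lra.
have F3 : forall a b, uniq a -> uniq b -> nc (Pr a - Pr b) <= (Gs - Gr a) + (Gs - Gr b).
  move=> a b ua ub; set U := undup (a ++ b).
  have uU : uniq U := undup_uniq _.
  have sa : {subset a <= U} by move=> x hx; rewrite mem_undup mem_cat hx.
  have sb : {subset b <= U} by move=> x hx; rewrite mem_undup mem_cat hx orbT.
  have [h1 _] := subset_diff ua uU sa.
  have [h2 _] := subset_diff ub uU sb.
  have h3 := F1 U uU.
  have -> : Pr a - Pr b = - (Pr U - Pr a) + (Pr U - Pr b) by ring.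
  apply: (le_trans (ncD _ _)); rewrite normcN; lra.

have e0 : forall T, exh T -> forall n, 0 <= Gs - Gr (T n).
  move=> T [uT _ _] n; have := F1 _ (uT n); lra.
pose u n := complex.Re (Pr (S n)); pose v n := complex.Im (Pr (S n)).
have cu : cvg (u @ \oo).
  apply: (@cauchyR _ u (fun n => Gs - Gr (S n))); last exact: F2.
  move=> n m; rewrite /u -ReB; exact: (le_trans (ncRe _) (F3 _ _ (uS n) (uS m))).
have cv : cvg (v @ \oo).
  apply: (@cauchyR _ v (fun n => Gs - Gr (S n))); last exact: F2.
  move=> n m; rewrite /v -ImB; exact: (le_trans (ncIm _) (F3 _ _ (uS n) (uS m))).
set L : R[i] := (lim (u @ \oo)) +i* (lim (v @ \oo)).
have P1 : forall e : R, 0 < e -> exists N, forall n, (N <= n)%N -> nc (L - Pr (S n)) < e.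
  move=> e ep.
  have [N1 H1] := cvgR _ _ cu (e/2) ltac:(by rewrite divr_gt0).
  have [N2 H2] := cvgR _ _ cv (e/2) ltac:(by rewrite divr_gt0).
  exists (maxn N1 N2) => n Nn.
  have h1 := H1 n (leq_trans (leq_maxl _ _) Nn).
  have h2 := H2 n (leq_trans (leq_maxr _ _) Nn).
  apply: (le_lt_trans (ncReIm _)); rewrite ReB ImB /=; rewrite /u /v in h1 h2; lra.
exists L; split; first exact: cvgC.
apply: cvgC => e ep.
have [N1 H1] := P1 (e/2) ltac:(by rewrite divr_gt0).
have [N2 H2] := F2 S hS (e/4) ltac:(by rewrite divr_gt0).
have [N3 H3] := F2 S' hS' (e/4) ltac:(by rewrite divr_gt0).
exists (maxn N1 (maxn N2 N3)) => n Nn.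
have h1 := H1 n (leq_trans (leq_maxl _ _) Nn).
have h2 := H2 n (leq_trans (leq_trans (leq_maxl _ _) (leq_maxr _ _)) Nn).
have h3 := H3 n (leq_trans (leq_trans (leq_maxr _ _) (leq_maxr _ _)) Nn).
have h4 := F3 _ _ (uS n) (uS' n).
have -> : L - Pr (S' n) = (L - Pr (S n)) + (Pr (S n) - Pr (S' n)) by ring.
apply: (le_lt_trans (ncD _ _)); lra.
Qed.
End Rearr.
Arguments exh {I} S.
Arguments Pr {R I} f s.
Arguments Gr {R I} f s.
Arguments rearr {R I f} bound {S S'}.
Arguments exh_mono {I S}.
Arguments exh_fin {I S}.
Arguments subset_diff {R I} f {S U}.
Arguments nc_ge0 {R}. Arguments ncD {R}. Arguments ncB {R}. Arguments ncM {R}. Arguments nc1 {R}.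
Arguments Gr_ge1 {R I} f s. Arguments Pr_bound {R I} f s. Arguments Pr_sub1 {R I} f s.
Section Box.
Context {R : realType}.
Local Notation nc := (@Normc.normc R).

Definition fq (y : R[i]) (qs : seq R[i]) (c : {ffun 'I_(size qs) -> nat}) : R[i] :=
  y * \prod_(i < size qs) (nth 0 qs i) ^+ (c i).

Definition box n N : seq {ffun 'I_n -> nat} :=
  [seq [ffun i => nat_of_ord (j i)] | j : {ffun 'I_n -> 'I_N} <- enum {ffun 'I_n -> 'I_N}].

Lemma box_mem n N c : (c \in box n N) = [forall i, (c i < N)%N].
Proof.
apply/idP/idP.
  move=> /mapP [j _ ->]; apply/forallP => i; by rewrite ffunE.
move=> /forallP H.
have -> : c = [ffun i => nat_of_ord ([ffun k => Ordinal (H k)] i)].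
  by apply/ffunP => i; rewrite !ffunE.
by apply: map_f; rewrite mem_enum.
Qed.

Lemma box_exh n : exh (box n).
Proof.
split.
- move=> N; rewrite map_inj_uniq ?enum_uniq // => j k /ffunP H.
  by apply/ffunP => i; apply: val_inj; have := H i; rewrite !ffunE.
- move=> N c; rewrite !box_mem => /forallP H; apply/forallP => i.
  exact: ltnW (H i).
- move=> c; exists (\sum_i c i).+1; rewrite box_mem; apply/forallP => i.
  by rewrite ltnS (bigD1 i) //= leq_addr.
Qed.

Lemma qpoch_boxE y qs N : qpoch_box y qs N = Pr (fq y qs) (box (size qs) N).
Proof.
rewrite /qpoch_box /Pr /box big_map big_enum /=.
by apply: eq_bigr => j _; rewrite /fq; congr (1 - _ * _); apply: eq_bigr => i _; rewrite ffunE.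
Qed.
End Box.
Section Bound.
Context {R : realType}.
Local Notation nc := (@Normc.normc R).

Lemma nc_prod (I : Type) (r : seq I) (F : I -> R[i]) :
  nc (\prod_(i <- r) F i) = \prod_(i <- r) nc (F i).
Proof. exact: (big_morph nc ncM nc1). Qed.

Lemma nc_exp (z : R[i]) k : nc (z ^+ k) = nc z ^+ k.
Proof. by elim: k => [|k IH]; rewrite ?expr0 ?nc1 // !exprS ncM IH. Qed.

Lemma Gr_exp (I : eqType) (f : I -> R[i]) s :
  Gr f s <= expR (\sum_(c <- s) nc (f c)).
Proof.
elim: s => [|a s IH]; rewrite /Gr ?big_nil ?big_cons ?expR0 // -/(Gr f s).
rewrite expRD; apply: ler_pM => //.
- by rewrite addr_ge0 ?nc_ge0.
- by apply: le_trans (Gr_ge1 f s).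
- exact: expR_ge1Dx.
Qed.

Lemma geom_bound (a : R) N : 0 <= a < 1 -> \sum_(k < N) a ^+ k <= (1 - a)^-1.
Proof.
move=> /andP[a0 a1].
have E : (1 - a) * \sum_(k < N) a ^+ k = 1 - a ^+ N.
  elim: N => [|N IH]; first by rewrite big_ord0 expr0 mulr0 subrr.
  by rewrite big_ord_recr /= mulrDr IH exprS; ring.
have p : 0 < 1 - a by rewrite subr_gt0.
rewrite -(ler_pM2l p) E mulrV ?unitfE ?gt_eqF //.
by rewrite gerBl exprn_ge0.
Qed.

Lemma fq_bound (y : R[i]) (qs : seq R[i]) : all (fun q => nc q < 1) qs ->
  exists B, forall s, uniq s -> Gr (fq y qs) s <= B.
Proof.
move=> Hq.
set K := nc y * \prod_(i < size qs) (1 - nc (nth 0 qs i))^-1.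
exists (expR K) => s us.
have [N HN] := exh_fin (box_exh (size qs)) s.
have [uB _ _] := box_exh (size qs).
have [_ h1] := subset_diff (fq y qs) us (uB N) HN.
apply: (le_trans h1); apply: (le_trans (Gr_exp _ (fq y qs) _)).
rewrite ler_expR /box big_map big_enum /=.
have -> : \sum_(j : {ffun 'I_(size qs) -> 'I_N})
      nc (fq y qs [ffun i => nat_of_ord (j i)])
    = nc y * \prod_(i < size qs) \sum_(k < N) nc (nth 0 qs i) ^+ k.
  rewrite bigA_distr_bigA big_distrr /=; apply: eq_bigr => j _.
  rewrite /fq ncM nc_prod; congr (_ * _); apply: eq_bigr => i _.
  by rewrite ffunE nc_exp.
rewrite /K; apply: ler_wpM2l; first exact: nc_ge0.
apply: ler_prod => i _; rewrite sumr_ge0 /=; last by move=> k _; rewrite exprn_ge0 ?nc_ge0.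
apply: geom_bound; rewrite nc_ge0 /=.
by have /allP := Hq; apply; rewrite mem_nth.
Qed.
End Bound.
Section Conv.
Context {R : realType}.
Local Notation nc := (@Normc.normc R).
Variable n : nat.
Local Notation I := {ffun 'I_n -> nat}.

Definition cv (f : I -> R[i]) : (R[i])^o :=
  lim ((fun N => Pr f (box n N) : (R[i])^o) @ \oo).

Definition bnd (f : I -> R[i]) := exists B, forall s, uniq s -> Gr f s <= B.

Lemma bnd_map {f g : I -> R[i]} {p : I -> I} : bnd f -> injective p -> f \o p =1 g -> bnd g.
Proof.
move=> [B HB] ip fg; exists B => s us.
have -> : Gr g s = Gr f (map p s).
  by rewrite /Gr big_map; apply: eq_bigr => i _; rewrite -fg.
by apply: HB; rewrite map_inj_uniq.
Qed.

Lemma cv_cvg {f : I -> R[i]} : bnd f -> (fun N => Pr f (box n N) : (R[i])^o) @ \oo --> cv f.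
Proof.
move=> bf; have [L [H _]] := rearr bf (box_exh n) (box_exh n).
by rewrite /cv (cvg_lim (@norm_hausdorff _ _) H).
Qed.

Lemma split_conv (f g h : I -> R[i]) (pg ph : I -> I) :
  bnd f -> injective pg -> injective ph -> (forall a b, pg a != ph b) ->
  (forall d, exists a, d = pg a \/ d = ph a) -> f \o pg =1 g -> f \o ph =1 h ->
  cv f = cv g * cv h.
Proof.
move=> bf ig ih dis cov fg fh.
have bg := bnd_map bf ig fg; have bh := bnd_map bf ih fh.
have [uB mB cB] := box_exh n.
set S' := fun N => map pg (box n N) ++ map ph (box n N).
have eS' : exh S'.
  split.
  - move=> N; rewrite /S' cat_uniq (map_inj_uniq ig) (map_inj_uniq ih) uB andbT /=.
    apply/hasPn => x /mapP [b _ ->]; apply/negP => /mapP [a _ /eqP].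
    by rewrite eq_sym (negbTE (dis a b)).
  - move=> N x; rewrite /S' !mem_cat => /orP[] /mapP [a Ha ->].
      by rewrite map_f ?mB.
    by rewrite map_f ?mB ?orbT.
  - move=> d; have [a [->|->]] := cov d; have [M HM] := cB a; exists M;
    by rewrite /S' mem_cat map_f ?orbT.
have [L [H1 H2]] := rearr bf (box_exh n) eS'.
have E : (fun N => Pr f (S' N) : (R[i])^o) = (fun N => Pr g (box n N) * Pr h (box n N)).
  apply: funext => N; rewrite /Pr /S' big_cat !big_map /=.
  by congr (_ * _); apply: eq_bigr => i _; rewrite -?fg -?fh.
have H3 : (fun N => Pr f (S' N) : (R[i])^o) @ \oo --> cv g * cv h.
  by rewrite E; apply: cvgM; apply: cv_cvg.
rewrite {1}/cv (cvg_lim (@norm_hausdorff _ _) H1); have e := cvg_lim (@norm_hausdorff _ _) H3; rewrite (cvg_lim (@norm_hausdorff _ _) H2) in e; exact: e.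
Qed.

Lemma perm_conv (f g : I -> R[i]) (p : I -> I) :
  bnd f -> injective p -> (forall d, exists a, d = p a) -> f \o p =1 g ->
  cv f = cv g.
Proof.
move=> bf ip cov fg.
have bg := bnd_map bf ip fg.
have [uB mB cB] := box_exh n.
set S' := fun N => map p (box n N).
have eS' : exh S'.
  split.
  - by move=> N; rewrite /S' (map_inj_uniq ip).
  - by move=> N x /mapP [a Ha ->]; rewrite map_f ?mB.
  - by move=> d; have [a ->] := cov d; have [M HM] := cB a; exists M; rewrite map_f.
have [L [H1 H2]] := rearr bf (box_exh n) eS'.
have E : (fun N => Pr f (S' N) : (R[i])^o) = (fun N => Pr g (box n N)).
  by apply: funext => N; rewrite /Pr /S' big_map; apply: eq_bigr => i _; rewrite -fg.
have H3 : (fun N => Pr f (S' N) : (R[i])^o) @ \oo --> cv g by rewrite E; apply: cv_cvg.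
rewrite {1}/cv (cvg_lim (@norm_hausdorff _ _) H1); have e := cvg_lim (@norm_hausdorff _ _) H3; rewrite (cvg_lim (@norm_hausdorff _ _) H2) in e; exact: e.
Qed.
End Conv.
Section KLemma.
Context {R : realType}.
Local Notation nc := (@Normc.normc R).
Variable T : seq R[i].
Local Notation m := (size T).
Local Notation J := {ffun 'I_(m.+2) -> nat}.
Definition o1 : 'I_(m.+2) := lift ord0 ord0.
Definition rest (c : J) : R[i] := \prod_(i < m) (nth 0 T i) ^+ (c (lift ord0 (lift ord0 i))).
Definition set2 (c : J) (A B : nat) : J :=
  [ffun i : 'I_(m.+2) => if nat_of_ord i == 0%N then A else if nat_of_ord i == 1%N then B else c i].

Lemma fq2 y a b (c : J) : fq y [:: a, b & T] c = y * (a ^+ c ord0 * b ^+ c o1 * rest c).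
Proof.
by rewrite /fq /= !big_ord_recl /= /rest !mulrA.

Qed.

Lemma set2_0 c A B : set2 c A B ord0 = A. Proof. by rewrite ffunE. Qed.
Lemma set2_1 c A B : set2 c A B o1 = B. Proof. by rewrite ffunE. Qed.
Lemma set2_rest c A B : rest (set2 c A B) = rest c.
Proof. by apply: eq_bigr => i _; rewrite ffunE. Qed.


Lemma ffun2P (c d : J) : c ord0 = d ord0 -> c o1 = d o1 ->
  (forall i : 'I_(m.+2), (1 < i)%N -> c i = d i) -> c = d.
Proof.
move=> h0 h1 h; apply/ffunP => -[[|[|k]] Hk].
- by rewrite (_ : Ordinal Hk = ord0) //; apply: val_inj.
- by rewrite (_ : Ordinal Hk = o1) //; apply: val_inj.
- by apply: h.
Qed.

Lemma set2_gt1 c A B (i : 'I_(m.+2)) : (1 < i)%N -> set2 c A B i = c i.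
Proof. by rewrite ffunE; case: i => -[|[|k]] Hk. Qed.

Lemma set2K c : set2 c (c ord0) (c o1) = c.
Proof. by apply: ffun2P; rewrite ?set2_0 ?set2_1 // => i /set2_gt1. Qed.

Variables (u v y : R[i]).
Hypothesis (hu : nc u < 1) (hv : nc v < 1) (hT : all (fun q => nc q < 1) T).

Lemma K_lemma :
  qpoch_conv y [:: u, v & T] = qpoch_conv y [:: u, u * v & T] * qpoch_conv (y * v) [:: v, u * v & T].
Proof.
have E : forall (y' : R[i]) (qs : seq R[i]), qpoch_conv y' qs = @cv _ _ (fq y' qs).
  move=> y' qs; rewrite /qpoch_conv.
  have -> : qpoch_box y' qs = (fun N => Pr (fq y' qs) (box (size qs) N)).
    by apply: funext => N; apply: qpoch_boxE.
  by [].
rewrite !E.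
pose pg (c : J) := set2 c (c ord0 + c o1) (c o1).
pose ph (c : J) := set2 c (c o1) (c ord0 + c o1).+1.
apply: (@split_conv _ _ _ _ _ pg ph).
- exact: (fq_bound y [:: u, v & T] ltac:(by rewrite /= hu hv hT)).
- move=> a b /= e; apply: ffun2P.
  + have := congr1 (fun c : J => c ord0) e; have := congr1 (fun c : J => c o1) e.
    rewrite /pg !set2_0 !set2_1 => ->; lia.
  + by have := congr1 (fun c : J => c o1) e; rewrite /pg !set2_1.
  + by move=> i hi; have := congr1 (fun c : J => c i) e; rewrite /pg !set2_gt1.
- move=> a b /= e; apply: ffun2P.
  + have := congr1 (fun c : J => c ord0) e; have := congr1 (fun c : J => c o1) e.
    rewrite /ph !set2_0 !set2_1 => -[] h1 h2; lia.
  + by have := congr1 (fun c : J => c ord0) e; rewrite /ph !set2_0.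
  + by move=> i hi; have := congr1 (fun c : J => c i) e; rewrite /ph !set2_gt1.
- move=> a b; apply/eqP => e.
  have := congr1 (fun c : J => c ord0) e; have := congr1 (fun c : J => c o1) e.
  rewrite /pg /ph !set2_0 !set2_1; lia.
- move=> d; case: (leqP (d o1) (d ord0)) => hd.
    exists (set2 d (d ord0 - d o1) (d o1)); left; rewrite /pg set2_0 set2_1.
    apply: ffun2P; rewrite ?set2_0 ?set2_1 ?subnK //.
    by move=> i hi; rewrite !set2_gt1.
  exists (set2 d (d o1 - (d ord0).+1) (d ord0)); right; rewrite /ph set2_0 set2_1.
  apply: ffun2P; rewrite ?set2_0 ?set2_1 //; first lia.
  by move=> i hi; rewrite !set2_gt1.
- move=> c /=; rewrite !fq2 /pg set2_0 set2_1 set2_rest.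
  by rewrite exprD exprMn; ring.
- move=> c /=; rewrite !fq2 /ph set2_0 set2_1 set2_rest.
  by rewrite !exprS exprD exprMn; ring.
Qed.

Lemma swap_lemma (a b : R[i]) : nc a < 1 -> nc b < 1 ->
  qpoch_conv y [:: a, b & T] = qpoch_conv y [:: b, a & T].
Proof.
move=> ha hb.
have E : forall (y' : R[i]) (qs : seq R[i]), qpoch_conv y' qs = @cv _ _ (fq y' qs).
  move=> y' qs; rewrite /qpoch_conv.
  have -> : qpoch_box y' qs = (fun N => Pr (fq y' qs) (box (size qs) N)).
    by apply: funext => N; apply: qpoch_boxE.
  by [].
rewrite !E.
pose p (c : J) := set2 c (c o1) (c ord0).
have pK : cancel p p.
  by move=> c; rewrite /p set2_0 set2_1; apply: ffun2P; rewrite ?set2_0 ?set2_1 // => i hi; rewrite !set2_gt1.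
apply: (@perm_conv _ _ _ _ p).
- exact: (fq_bound y [:: a, b & T] ltac:(by rewrite /= ha hb hT)).
- exact: can_inj pK.
- by move=> d; exists (p d); rewrite pK.
- by move=> c /=; rewrite !fq2 /p set2_0 set2_1 set2_rest; ring.
Qed.
End KLemma.
Section T7.
Context {R : realType}.
Local Notation nc := (@Normc.normc R).
Lemma nc_e2pi (w : R[i]) : nc (e2pi w) = expR (- (2 * pi * complex.Im w)).
Proof.
rewrite /e2pi ncM.
have -> : nc ((cos (2 * pi * complex.Re w)) +i* (sin (2 * pi * complex.Re w))) = 1.
  by rewrite /Normc.normc cos2Dsin2 sqrtr1.
rewrite mulr1 /Normc.normc /= expr0n /= addr0 sqrtr_sqr ger0_norm //.

Qed.
Lemma normE (z : R[i]) : `|z| = (nc z)%:C. Proof. by []. Qed.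
Lemma ltnc1 (q : R[i]) : (1 < `|q|) = (1 < nc q).
Proof. by rewrite normE ltcR. Qed.
Lemma e2pi_ne1 (w : R[i]) : complex.Im w != 0 -> nc (e2pi w) != 1.
Proof.
move=> h; rewrite nc_e2pi; apply/eqP => /(congr1 (@ln R)); rewrite expRK ln1 => /eqP.
rewrite oppr_eq0 !mulf_eq0 (negbTE h) orbF pnatr_eq0 /= => /eqP pi0.
by have := pi_gt0 R; rewrite pi0 ltxx.
Qed.
End T7.
Arguments e2pi_ne1 {R w}.
Section Final.
Context {R : realType}.
Local Notation nc := (@Normc.normc R).

Lemma expR_ne1 (t : R) : t != 0 -> expR (- (2 * pi * t)) != 1.
Proof.
move=> h; apply/eqP => /(congr1 (@ln R)); rewrite expRK ln1 => /eqP.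
rewrite oppr_eq0 !mulf_eq0 (negbTE h) orbF pnatr_eq0 /= => /eqP pi0.
by have := pi_gt0 R; rewrite pi0 ltxx.
Qed.

Lemma nc_gt0_neq0 (q : R[i]) : 0 < nc q -> q != 0.
Proof. by apply: contraTneq => ->; rewrite /Normc.normc /= expr0n /= addr0 sqrtr0 ltxx. Qed.

Lemma patX (e : bool) (a c d : R[i]) : a = c * d ->
  (if e then c^-1 else c) != 0 -> (if ~~ e then d^-1 else d) != 0 ->
  (if e then a^-1 else a) / (if e then c^-1 else c) = (if ~~ e then d^-1 else d)^-1.
Proof.
move=> -> ; case: e => /=; rewrite ?invr_eq0 => hc hd.
- by rewrite invrK; field; rewrite ?hc ?hd.
- by rewrite invrK; field; rewrite ?hc ?hd.
Qed.

Lemma patY (e : bool) (a c d : R[i]) : d = c * a ->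
  (if e then c^-1 else c) != 0 -> (if e then d^-1 else d) != 0 ->
  (if ~~ e then a^-1 else a) / (if e then c^-1 else c) = (if e then d^-1 else d)^-1.
Proof.
move=> -> ; case: e => /=; rewrite ?invr_eq0 => hc hd.
- rewrite !invrK; have ha : a != 0 by apply: contraNneq hd => ->; rewrite mulr0.
  by field; rewrite ?hc ?ha.
- have ha : a != 0 by apply: contraNneq hd => ->; rewrite mulr0.
  by field; rewrite ?hc ?ha.
Qed.

Lemma patZ (e : bool) (a c d : R[i]) : c = a * d ->
  (if ~~ e then c^-1 else c) != 0 -> (if ~~ e then d^-1 else d) != 0 ->
  (if ~~ e then a^-1 else a) / (if ~~ e then c^-1 else c) = (if ~~ e then d^-1 else d)^-1.
Proof.
move=> -> ; case: e => /=; rewrite ?invr_eq0 => hc hd.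
- have ha : a != 0 by apply: contraNneq hc => ->; rewrite mul0r.
  have hd' : d != 0 by apply: contraNneq hc => ->; rewrite mulr0.
  by rewrite ?invrK; field; rewrite ?ha ?hd'.
- have ha : a != 0 by apply: contraNneq hc => ->; rewrite mul0r.
  have hd' : d != 0 by apply: contraNneq hc => ->; rewrite mulr0.
  by rewrite ?invrK; field; rewrite ?ha ?hd'.
Qed.

Variable T : seq R[i].
Hypothesis hT : all (fun q => nc q < 1) T.

Lemma Kg (Y Y2 u v w : R[i]) : nc u < 1 -> nc v < 1 -> w = u * v -> Y2 = Y * v ->
  qpoch_conv Y [:: u, v & T] = qpoch_conv Y [:: u, w & T] * qpoch_conv Y2 [:: v, w & T].
Proof. by move=> hu hv -> ->; apply: K_lemma. Qed.

Lemma Sg (Y a b : R[i]) : nc a < 1 -> nc b < 1 ->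
  qpoch_conv Y [:: a, b & T] = qpoch_conv Y [:: b, a & T].
Proof. by move=> ha hb; apply: swap_lemma. Qed.
End Final.
Arguments nc_gt0_neq0 {R q}.
Arguments Kg {R T}. Arguments Sg {R T} hT Y {a b}.
Ltac nz := repeat (first [ assumption | apply: mulf_neq0 | rewrite invr_eq0 | apply/andP; split ]).
Ltac fs := field; nz.
Theorem proposition2p2 (R : realType) (z w0 w1 : R[i]) (ws : seq R[i]) :
  complex.Im w0 != 0 -> complex.Im w1 != 0 -> complex.Im (w0 + w1) != 0 ->
  all (fun w => complex.Im w != 0) ws ->
  let x := e2pi z in
  let q0 := e2pi w0 in
  let q1 := e2pi w1 in
  let qs := [seq e2pi w | w <- ws] in
  qpoch x [:: q0, q0 * q1 & qs] != 0 ->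
  qpoch x [:: q1^-1, q0 * q1 & qs] != 0 ->
  qpoch x [:: q0, q1 & qs] / qpoch x [:: q0, q0 * q1 & qs]
    = (qpoch x [:: q1^-1, q0 * q1 & qs])^-1.
Proof.
move=> h0 h1 h01 hws x q0 q1 qs HC HD.
have pos : forall w : R[i], 0 < Normc.normc (e2pi w) by move=> w; rewrite nc_e2pi expR_gt0.
have p0 : 0 < Normc.normc q0 := pos w0.
have p1 : 0 < Normc.normc q1 := pos w1.
have p01 : 0 < Normc.normc (q0 * q1) by rewrite ncM mulr_gt0.
have n0 : Normc.normc q0 != 1 := e2pi_ne1 h0.
have n1 : Normc.normc q1 != 1 := e2pi_ne1 h1.
have n01 : Normc.normc (q0 * q1) != 1.
  rewrite ncM /q0 /q1. rewrite !nc_e2pi -expRD.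
  have -> : - (2 * pi * complex.Im w0) + - (2 * pi * complex.Im w1) = - (2 * pi * complex.Im (w0 + w1)).
    have -> : complex.Im (w0 + w1) = complex.Im w0 + complex.Im w1 by case: (w0) => a b; case: (w1) => c d.
    by ring.
  exact: expR_ne1.
have q0n : q0 != 0 := nc_gt0_neq0 p0.
have q1n : q1 != 0 := nc_gt0_neq0 p1.
have hq : forall q : R[i], q \in qs -> 0 < Normc.normc q /\ Normc.normc q != 1.
  move=> q /mapP [w hw ->]; split; first exact: pos.
  by apply: e2pi_ne1; move/allP: hws; apply.
have fl : forall q : R[i], 0 < Normc.normc q -> Normc.normc q != 1 ->
    Normc.normc (if 1 < `|q| then q^-1 else q) < 1.
  move=> q hp hn. rewrite ltnc1; case: ifP => h.
    by rewrite Normc.normcV invf_lt1.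
  by rewrite lt_neqAle hn /= leNgt h.
set T := [seq (if 1 < `|q| then q^-1 else q) | q <- qs].
have hT : all (fun q => Normc.normc q < 1) T.
  by apply/allP => _ /mapP [q hq' ->]; have [a b] := hq q hq'; apply: fl.
set BQ := [seq q <- qs | 1 < `|q|].
have hB : \prod_(q <- BQ) q != 0.
  rewrite prodf_seq_neq0; apply/allP => q; rewrite mem_filter => /andP[_ hq'] /=.
  by have [a _] := hq q hq'; apply: nc_gt0_neq0.
set B := \prod_(q <- BQ) q in hB.
rewrite /qpoch /= in HC HD *.
rewrite -/T -/BQ !ltnc1 Normc.normcV invf_gt1 // in HC HD *.
have nM : Normc.normc (q0 * q1) = Normc.normc q0 * Normc.normc q1 by rewrite ncM.
have [s0|s0] : Normc.normc q0 < 1 \/ 1 < Normc.normc q0 by move: n0; rewrite neq_lt => /orP.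
all: have [s1|s1] : Normc.normc q1 < 1 \/ 1 < Normc.normc q1 by move: n1; rewrite neq_lt => /orP.
all: have [s01|s01] : Normc.normc (q0 * q1) < 1 \/ 1 < Normc.normc (q0 * q1) by move: n01; rewrite neq_lt => /orP.
all: rewrite ?s0 ?s1 ?s01 ?(lt_gtF s0) ?(lt_gtF s1) ?(lt_gtF s01) /= in HC HD *.
all: rewrite ?big_cons -/B ?negbK in HC HD *.
all: set e := odd (size BQ) in HC HD *.
all: have ncV1 : forall q : R[i], 1 < Normc.normc q -> Normc.normc q^-1 < 1 by
  move=> q hq1; rewrite Normc.normcV invf_lt1 // (lt_trans ltr01 hq1).
-
  apply: patX HC HD; rewrite invrK.
  have E2 : (q1^-1 * B)^-1 * x = B^-1 * x * q1 by fs.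
  by rewrite (Kg hT (B^-1 * x) ((q1^-1 * B)^-1 * x) q0 q1 (q0 * q1) s0 s1 erefl E2).
-
  exfalso; rewrite nM in s01; nra.
-
  apply: patY HC HD.
  have hv1 := ncV1 _ s1.
  have E1 : q0 = q0 * q1 * q1^-1 by fs.
  have E2 : (q1 * B)^-1 * x = B^-1 * x * q1^-1 by fs.
  rewrite (Sg hT (B^-1 * x) hv1 s01).
  rewrite (Kg hT (B^-1 * x) ((q1 * B)^-1 * x) (q0 * q1) q1^-1 q0 s01 hv1 E1 E2).
  by rewrite (Sg hT _ s01 s0) (Sg hT _ hv1 s0).
-
  apply: patZ HC HD.
  have hv1 := ncV1 _ s1; have hw := ncV1 _ s01.
  have E1 : q1^-1 = (q0 * q1)^-1 * q0 by fs.
  have E2 : (q1 * B)^-1 * x = (q0 * q1 * B)^-1 * x * q0 by fs.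
  rewrite (Sg hT ((q0 * q1 * B)^-1 * x) s0 hw).
  rewrite (Kg hT ((q0 * q1 * B)^-1 * x) ((q1 * B)^-1 * x) ((q0 * q1)^-1) q0 q1^-1 hw s0 E1 E2).
  by rewrite (Sg hT _ hw hv1) mulrC.
-
  apply: patZ HC HD; rewrite invrK.
  have hu := ncV1 _ s0.
  have E1 : q1 = q0^-1 * (q0 * q1) by fs.
  have E2 : (q1^-1 * B)^-1 * x = (q0 * B)^-1 * x * (q0 * q1) by fs.
  rewrite (Kg hT ((q0 * B)^-1 * x) ((q1^-1 * B)^-1 * x) q0^-1 (q0 * q1) q1 hu s01 E1 E2).
  by rewrite (Sg hT _ s01 s1).
-
  apply: patY HC HD; rewrite invrK.
  have hu := ncV1 _ s0; have hw := ncV1 _ s01.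
  have E1 : q0^-1 = q1 * (q0 * q1)^-1 by fs.
  have E2 : (q0 * (q0 * q1 * B))^-1 * x = (q1^-1 * (q0 * q1 * B))^-1 * x * (q0 * q1)^-1 by fs.
  rewrite (Kg hT ((q1^-1 * (q0 * q1 * B))^-1 * x) ((q0 * (q0 * q1 * B))^-1 * x) q1 ((q0 * q1)^-1) q0^-1 s1 hw E1 E2).
  have E3 : (q1^-1 * (q0 * q1 * B))^-1 * x = (q0 * B)^-1 * x by fs.
  by rewrite (Sg hT _ s1 hu) (Sg hT _ hw hu) E3 mulrC.
-
  exfalso; rewrite nM in s01; nra.
-
  apply: patX HC HD.
  have hu := ncV1 _ s0; have hv1 := ncV1 _ s1; have hw := ncV1 _ s01.
  have E0 : (q0 * (q1 * B))^-1 * x = (q0 * q1 * B)^-1 * x by fs.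
  have E1 : (q0 * q1)^-1 = q1^-1 * q0^-1 by fs.
  have E2 : (q0 * (q0 * q1 * B))^-1 * x = (q0 * q1 * B)^-1 * x * q0^-1 by fs.
  rewrite E0 (Sg hT _ hu hv1).
  rewrite (Kg hT ((q0 * q1 * B)^-1 * x) ((q0 * (q0 * q1 * B))^-1 * x) q1^-1 q0^-1 ((q0 * q1)^-1) hv1 hu E1 E2).
  by rewrite mulrC.
Qed.
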